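(* Let $n\geq 1$ and let $C$ be an all-ones CRC in $G_n$ with $\mathbf{0}\in C$ and $-e_n\in C$. Then: (1) for every slice pair $\{x,x-e_n\}$ there is $i\in\{0,\ldots,\rho\}$ with $x,x-e_n\in C_i$; (2) if an $n$-line contains words of $C_i$, then the words of $C_i$ on that line form a set invariant under translation by $\pm 4e_n$ and are a union of slice pairs; in particular every $n$-line is a union of slice pairs, which lie alternately in $C_i$ and $C_{i+1}$ for some $i\in\{0,\ldots,\rho-1\}$.
   Context: $G_n$: vertex set $\mathbb{Z}^n$, $x\sim y$ iff $\sum_i|x_i-y_i|=1$; $e_i$ is the $i$-th unit vector, $\mathbf{0}$ the all-zero word. For a code $C$ with covering radius $\rho$, $C_i=\{v:d(v,C)=i\}$. $C$ is a CRC if for all $i,j$ every vertex of $C_i$ has the same number $\alpha_{ij}$ of neighbours in $C_j$, with $\alpha_{ij}=0$ for $|i-j|>1$; $a_i=\alpha_{ii}$, $b_i=\alpha_{i,i+1}$, $c_i=\alpha_{i,i-1}$. $C$ is all-ones if $a_i=1$ for all $i=0,\ldots,\rho$. For $s\in\mathbb{Z}$, the $s$-slice is $\{x\in\mathbb{Z}^n: x_n\in\{2s,2s-1\}\}$; a slice pair is a pair $\{x,x-e_n\}$ with $x_n=2s$ for some $s$ (both in the $s$-slice). An $n$-line is a set $\{x+te_n:t\in\mathbb{Z}\}$. *)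

(* Defs.v *)
From Stdlib Require Import ClassicalEpsilon.
From mathcomp Require Import all_boot all_order all_algebra.
Set Implicit Arguments. Unset Strict Implicit. Unset Printing Implicit Defensive.
Import Order.TTheory GRing.Theory Num.Theory.
Local Open Scope ring_scope.

Definition pb (P : Prop) : bool :=
  if excluded_middle_informative P then true else false.

Definition pt (d : nat) := 'I_d -> int.

Definition dist d (x y : pt d) : nat := (\sum_(k < d) `|x k - y k|%N)%N.

(* C_i = { v : d(v,C) = i } for a (possibly infinite) code C *)
Definition in_Ci d (C : pt d -> Prop) (i : nat) (v : pt d) : Prop :=
  (exists c, C c /\ dist v c = i) /\ (forall c, C c -> (i <= dist v c)%N).

Definition nbr d (v : pt d) (p : 'I_d * bool) : pt d :=
  fun k => if k == p.1 then (if p.2 then v k + 1 else v k - 1) else v k.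

Definition nb_count d (C : pt d -> Prop) (v : pt d) (j : nat) : nat :=
  #|[pred p : 'I_d * bool | pb (in_Ci C j (nbr v p))]|.

Definition covering_radius d (C : pt d -> Prop) (rho : nat) : Prop :=
  (forall v, exists i, (i <= rho)%N /\ in_Ci C i v) /\ (exists v, in_Ci C rho v).

Definition is_CRC d (C : pt d -> Prop) (rho : nat) : Prop :=
  covering_radius C rho /\
  exists alpha : nat -> nat -> nat,
    (forall i j v, (i <= rho)%N -> (j <= rho)%N -> in_Ci C i v ->
        nb_count C v j = alpha i j) /\
    (forall i j, (i <= rho)%N -> (j <= rho)%N -> (j.+1 < i \/ i.+1 < j)%N ->
        alpha i j = 0%N).

Definition all_ones_CRC d (C : pt d -> Prop) (rho : nat) : Prop :=
  is_CRC C rho /\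
  forall i v, (i <= rho)%N -> in_Ci C i v -> nb_count C v i = 1%N.

(* Dimension n.+1: the last coordinate is ord_max *)
Definition zero_pt n : pt n.+1 := fun _ => 0.
Definition minus_en n : pt n.+1 := fun k => if k == ord_max then -1 else 0.

Definition shift_n n (x : pt n.+1) (t : int) : pt n.+1 :=
  fun k => if k == ord_max then x k + t else x k.

Definition set_last n (x : pt n.+1) (m : int) : pt n.+1 :=
  fun k => if k == ord_max then m else x k.

Definition pair_in n (C : pt n.+1 -> Prop) (j : nat) (x : pt n.+1) (s : int) : Prop :=
  in_Ci C j (set_last x (2 * s)) /\ in_Ci C j (set_last x (2 * s - 1)).

(* Main.v *)
From mathcomp Require Import zify.
Require Import Defs.
From Stdlib Require Import FunctionalExtensionality ClassicalEpsilon.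
From mathcomp Require Import all_boot all_order all_algebra.
Set Implicit Arguments. Unset Strict Implicit. Unset Printing Implicit Defensive.
Import Order.TTheory GRing.Theory Num.Theory.
Local Open Scope ring_scope.

Lemma nbrK d (v : pt d) k b : nbr (nbr v (k,b)) (k, ~~b) = v.
Proof.
apply: functional_extensionality => i; rewrite /nbr /=.
case: (i == k); case: b => /=; lia.
Qed.

Lemma nbrC d (v : pt d) k b k' b' : k != k' ->
  nbr (nbr v (k,b)) (k',b') = nbr (nbr v (k',b')) (k,b).
Proof.
move=> nk; apply: functional_extensionality => i; rewrite /nbr /=.
have [E1|E1] := eqVneq i k; have [E2|E2] := eqVneq i k'.
- by move: nk; rewrite -E1 -E2 eqxx.
- by [].
- by [].
- by [].
Qed.

Definition good n (f : pt n.+1 -> nat) :=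
  [/\ (forall v p, (f (nbr v p) <= (f v).+1)%N),
      (forall v, #|[pred p | f (nbr v p) == f v]| = 1%N) &
      (forall u v j, f u = f v ->
         #|[pred p | f (nbr u p) == j]| = #|[pred p | f (nbr v p) == j]|)].


Lemma lip2 n f (Hf : @good n f) v p : (f v <= (f (nbr v p)).+1)%N.
Proof.
case: Hf => L _ _; case: p => k b.
by have := L (nbr v (k,b)) (k, ~~b); rewrite nbrK.
Qed.

Lemma partner_uniq n f (Hf : @good n f) v p q :
  f (nbr v p) = f v -> f (nbr v q) = f v -> p = q.
Proof.
case: Hf => _ O _ hp hq; have [x Hx] := mem_card1 (O v).
have := Hx p; have := Hx q; rewrite !inE hp hq eqxx /=.
by move=> /esym/eqP -> /esym/eqP ->.
Qed.

Lemma partner_ex n f (Hf : @good n f) v : exists p, f (nbr v p) = f v.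
Proof.
case: Hf => _ O _; have [x Hx] := mem_card1 (O v).
by exists x; have := Hx x; rewrite !inE eqxx => /eqP.
Qed.

Lemma transl n f (Hf : @good n f) v k b j c : k != j ->
  f (nbr v (k,b)) = f v ->
  f (nbr (nbr v (j,c)) (k,b)) = f (nbr v (j,c)).
Proof.
move=> kj hp.
set w := nbr v (j,c); set u := nbr v (k,b).
have Ew : nbr w (k,b) = nbr u (j,c) by rewrite /w /u nbrC // eq_sym.
have h1 : f w != f v.
  apply/eqP=> e; have := partner_uniq Hf hp e; case=> E _.
  by rewrite E eqxx in kj.
have h2 : f (nbr u (j,c)) != f u.
  apply/eqP=> e.
  have e2 : f (nbr u (k, ~~b)) = f u by rewrite /u nbrK.
  have := partner_uniq Hf e e2; case=> E _; by rewrite E eqxx in kj.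
rewrite Ew; move: h1 h2; rewrite hp.
have [L _ _] := Hf.
have := lip2 Hf v (j,c); have := L v (j,c).
have := lip2 Hf u (j,c); have := L u (j,c).
have := lip2 Hf w (k,b); have := L w (k,b).
rewrite Ew -/w hp; lia.
Qed.

Definition Top n (f : pt n.+1 -> nat) (v : pt n.+1) := f (nbr v (ord_max,false)) = f v.

Lemma top_horiz n f (Hf : @good n f) v j c :
  Top f v -> j != ord_max -> Top f (nbr v (j,c)).
Proof. by move=> T jm; apply: transl => //; rewrite eq_sym. Qed.

Lemma top_slice0 n f (Hf : @good n f) (H0 : Top f (@zero_pt n)) :
  forall N x, x ord_max = 0 -> (\sum_k absz (x k))%N = N -> Top f x.
Proof.
elim=> [|N IH] x xm Hs.
  move/eqP: Hs; rewrite sum_nat_eq0 => /forallP H.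
  have -> : x = @zero_pt n; last by [].
  apply: functional_extensionality => k; have := H k; rewrite /zero_pt /=.
  by move/eqP; lia.
case: (pickP (fun k => x k != 0)) => [k hk|Hn]; last first.
  move: Hs; rewrite big1 // => k _; have := Hn k; rewrite /= => /negbFE/eqP->//.
have km : k != ord_max by apply/eqP=> E; move: hk; rewrite E xm.
set y := nbr x (k, x k < 0).
have Ex : x = nbr y (k, ~~ (x k < 0)) by rewrite /y nbrK.
rewrite Ex; apply: top_horiz => //; apply: IH.
  by rewrite /y /nbr /= eq_sym (negbTE km).
move: Hs; rewrite (bigD1 k) //= => Hs.
rewrite (bigD1 k) //=.
rewrite (eq_bigr (fun i => absz (x i))); last first.
  by move=> i ik; rewrite /y /nbr /= (negbTE ik).
rewrite /y /nbr /= eqxx; move: hk; idtac.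

move: Hs; case: (x k < 0) /ltP; lia.
Qed.

Lemma int_ind2 (P : int -> Prop) : P 0 -> (forall s, P s -> P (s+1)) ->
  (forall s, P s -> P (s-1)) -> forall s, P s.
Proof.
move=> P0 Hu Hd [m|m].
  elim: m => [|m IH] //; have := Hu _ IH; congr P; lia.
elim: m => [|m IH]; first by have := Hd _ P0; congr P.
have := Hd _ IH; congr P; lia.
Qed.

Lemma top_all n f (Hf : @good n f) (H0 : Top f (@zero_pt n)) :
  forall s x, x ord_max = 2 * s -> Top f x.
Proof.
apply: int_ind2.
  by move=> x xm; apply: (top_slice0 Hf H0 xm (erefl _)).
- move=> s IH x xm.
  set y := nbr x (ord_max,false); set z := nbr y (ord_max,false).
  have Tz : Top f z by apply: IH; rewrite /z /y /nbr /= eqxx; lia.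
  have [[k b] hp] := partner_ex Hf y.
  have [km|km] := eqVneq k ord_max.
    subst k; case: b hp => hp.
      by move: hp; rewrite /y nbrK /Top => ->.
    have e2 : f (nbr z (ord_max,true)) = f z by rewrite /z nbrK; exact: esym hp.
    by have := partner_uniq Hf e2 Tz.
  have := @transl n f Hf y k b ord_max false km hp; rewrite -/z => e.
  by have := partner_uniq Hf e Tz; case=> E; rewrite E eqxx in km.
- move=> s IH x xm.
  set y := nbr x (ord_max,true); set u := nbr y (ord_max,true).
  have Tu : Top f u by apply: IH; rewrite /u /y /nbr /= eqxx; lia.
  have ey : f (nbr y (ord_max,true)) = f y by move: Tu; rewrite /Top /u nbrK.
  have [[k b] hp] := partner_ex Hf x.
  have [km|km] := eqVneq k ord_max.
    subst k; case: b hp => hp; last by [].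
    have e2 : f (nbr y (ord_max,false)) = f y by rewrite /y nbrK; exact: esym hp.
    by have := partner_uniq Hf e2 ey.
  have := @transl n f Hf x k b ord_max true km hp; rewrite -/y => e.
  by have := partner_uniq Hf e ey; case=> E; rewrite E eqxx in km.
Qed.

Lemma top_count n f (Hf : @good n f) v : Top f v ->
  f (nbr v (ord_max,true)) = f (nbr (nbr v (ord_max,false)) (ord_max,false)).
Proof.
move=> Tv; set w := nbr v (ord_max,false); set j := f (nbr v (ord_max,true)).
have hj : j != f v.
  by apply/eqP=> e; have := partner_uniq Hf e Tv.
have [_ _ Cn] := Hf.
have := Cn v w j (esym Tv).
rewrite (cardD1 (ord_max,true)) (cardD1 (ord_max,false)).
rewrite [in X in _ = X](cardD1 (ord_max,true)) [in X in _ = X](cardD1 (ord_max,false)).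
have Ew : nbr w (ord_max,true) = v by rewrite /w nbrK.
have hj' : (f v == j) = false by rewrite eq_sym (negbTE hj).
have hne : ((ord_max, false) != (ord_max, true) :> 'I_n.+1 * bool) = true by apply/negP => /eqP [].
rewrite !inE /= Ew eqxx -/w Tv hj' hne andbF /=.
have -> : #|[predD1 [predD1 [pred p | f (nbr w p) == j] & (ord_max,true)] & (ord_max,false)]|
  = #|[predD1 [predD1 [pred p | f (nbr v p) == j] & (ord_max,true)] & (ord_max,false)]|.
  apply: eq_card => -[k b]; rewrite !inE /=.
  have [->|km] := eqVneq k ord_max; first by case: b; rewrite eqxx /= ?andbF.
  have mk : ord_max != k by rewrite eq_sym.
  have := @transl n f Hf v ord_max false k b mk Tv.
  by rewrite /w (@nbrC _ v ord_max false k b mk) => ->.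
case: (f (nbr w (ord_max,false)) =P j) => [->//|ne].
rewrite /= !add0n add1n => /esym H; exfalso; exact: (@n_Sn _ H).
Qed.

Lemma nbr_sl_up n (x : pt n.+1) m : nbr (set_last x m) (ord_max,true) = set_last x (m+1).
Proof. by apply: functional_extensionality => k; rewrite /nbr /set_last /=; case: (k == ord_max). Qed.
Lemma nbr_sl_dn n (x : pt n.+1) m : nbr (set_last x m) (ord_max,false) = set_last x (m-1).
Proof. by apply: functional_extensionality => k; rewrite /nbr /set_last /=; case: (k == ord_max). Qed.
Lemma sl_max n (x : pt n.+1) m : set_last x m ord_max = m.
Proof. by rewrite /set_last eqxx. Qed.

Lemma parity (m : int) : exists s : int, m = 2*s \/ m = 2*s - 1.
Proof.
exists ((m + 1) %/ 2)%Z. have := divz_eq (m+1) 2.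
have := modz_ge0 (m+1) (isT : (2:int) != 0).
have := ltz_mod (m+1) (isT : (2:int) != 0). lia.
Qed.


Lemma line_facts n f (Hf : @good n f) (H0 : Top f (@zero_pt n)) (x : pt n.+1) :
  let g := fun m => f (set_last x m) in
  [/\ (forall s, g (2*s - 1) = g (2*s)),
      (forall s, g (2*s + 1) = g (2*s - 2)),
      (forall s, g (2*s + 1) != g (2*s)),
      (forall m : int, (g (m+1)%R <= (g m).+1)%N /\ (g m <= (g (m+1)%R).+1)%N) &
      (forall m, g (m + 4) = g m)].
Proof.
move=> g.
have T s : Top f (set_last x (2*s)) by apply: (top_all Hf H0 (s := s)); rewrite sl_max.
have G1 s : g (2*s - 1) = g (2*s) by have := T s; rewrite /Top nbr_sl_dn.
have G2 s : g (2*s + 1) = g (2*s - 2).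
  have := top_count Hf (T s); rewrite nbr_sl_up !nbr_sl_dn.
  by have -> : 2*s - 1 - 1 = 2*s - 2 by lia.
have G3 s : g (2*s + 1) != g (2*s).
  apply/eqP => e.
  have e1 : f (nbr (set_last x (2*s)) (ord_max,true)) = f (set_last x (2*s)) by rewrite nbr_sl_up.
  by have := partner_uniq Hf e1 (T s).
have G4 (m : int) : (g (m+1)%R <= (g m).+1)%N /\ (g m <= (g (m+1)%R).+1)%N.
  have [L _ _] := Hf; rewrite /g /= -nbr_sl_up; split; [exact: L | exact: lip2].
split=> // m; have [s [->| ->]] := parity m.
  have := G1 (s + 2); have := G2 (s + 1).
  have -> : 2 * (s + 2) - 1 = 2*s + 4 - 1 by lia.
  have -> : 2 * (s + 2) = 2*s + 4 by lia.
  have -> : 2 * (s + 1) + 1 = 2*s + 4 - 1 by lia.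
  have -> : 2 * (s + 1) - 2 = 2*s by lia.
  by move=> e2 e1; rewrite -e1 e2.
have := G1 (s + 2); have := G2 (s + 1); have := G1 s.
have -> : 2 * (s + 2) - 1 = 2*s - 1 + 4 by lia.
have -> : 2 * (s + 2) = 2*s + 4 by lia.
have -> : 2 * (s + 1) + 1 = 2*s - 1 + 4 by lia.
have -> : 2 * (s + 1) - 2 = 2*s by lia.
by move=> a b c; rewrite b a.
Qed.

Lemma dist_nbr d (v c : pt d) p : (dist (nbr v p) c <= (dist v c).+1)%N.
Proof.
case: p => k b; rewrite /dist (bigD1 k) // [X in (_ <= X.+1)%N](bigD1 k) //=.
rewrite (eq_bigr (fun i => absz (v i - c i))); last first.
  by move=> i ik; rewrite /nbr /= (negbTE ik).
rewrite /nbr /= eqxx; case: b; lia.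
Qed.

Lemma dist_self d (c : pt d) : dist c c = 0%N.
Proof. by rewrite /dist big1 // => i _; rewrite subrr. Qed.

Lemma in_Ci_uniq d (C : pt d -> Prop) i j v : in_Ci C i v -> in_Ci C j v -> i = j.
Proof.
move=> [[c [Cc dc]] Hi] [[c' [Cc' dc']] Hj].
have := Hi c' Cc'; have := Hj c Cc; rewrite dc dc'; lia.
Qed.

Definition fd d (C : pt d -> Prop) rho
  (cov : forall v, exists i, (i <= rho)%N /\ in_Ci C i v) (v : pt d) : nat :=
  proj1_sig (constructive_indefinite_description _ (cov v)).

Lemma fdP d (C : pt d -> Prop) rho cov v :
  (@fd d C rho cov v <= rho)%N /\ in_Ci C (fd cov v) v.
Proof. rewrite /fd; exact: proj2_sig (constructive_indefinite_description _ (cov v)). Qed.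

Lemma fdE d (C : pt d -> Prop) rho cov v i :
  in_Ci C i v <-> @fd d C rho cov v = i.
Proof.
split=> [h|<-]; last exact: (fdP cov v).2.
exact: in_Ci_uniq (fdP cov v).2 h.
Qed.

Lemma pbE d (C : pt d -> Prop) rho cov j w :
  pb (in_Ci C j w) = (@fd d C rho cov w == j).
Proof.
rewrite /pb; case: excluded_middle_informative => h.
  by apply/esym/eqP; exact: (proj1 (fdE cov w j) h).
by apply/esym/eqP => e; apply: h; exact: (proj2 (fdE cov w j) e).
Qed.

Lemma nb_countE d (C : pt d -> Prop) rho cov v j :
  nb_count C v j = #|[pred p | @fd d C rho cov (nbr v p) == j]|.
Proof. by apply: eq_card => p; rewrite !inE (pbE cov). Qed.

Lemma shift_sl n (x : pt n.+1) t : shift_n x t = set_last x (x ord_max + t).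
Proof.
apply: functional_extensionality => k; rewrite /shift_n /set_last.
by have [->|] := eqVneq k ord_max.
Qed.

Theorem mainTheorem8 (n : nat) (C : pt n.+1 -> Prop) (rho : nat) :
  all_ones_CRC C rho -> C (@zero_pt n) -> C (@minus_en n) ->
  (forall (x : pt n.+1) (s : int), x ord_max = 2 * s ->
     exists i, (i <= rho)%N /\ in_Ci C i x /\ in_Ci C i (shift_n x (-1))) /\
  (forall (x : pt n.+1) (i : nat),
     (exists t : int, in_Ci C i (shift_n x t)) ->
     (forall t : int, in_Ci C i (shift_n x t) ->
        in_Ci C i (shift_n x (t + 4)) /\ in_Ci C i (shift_n x (t - 4))) /\
     (forall m s : int, in_Ci C i (set_last x m) ->
        (m = 2 * s -> in_Ci C i (set_last x (2 * s - 1))) /\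
        (m = 2 * s - 1 -> in_Ci C i (set_last x (2 * s))))) /\
  (forall x : pt n.+1, exists i, (i < rho)%N /\
     forall s : int,
       (pair_in C i x s /\ pair_in C i.+1 x (s + 1)) \/
       (pair_in C i.+1 x s /\ pair_in C i x (s + 1))).
Proof.
move=> [[[cov _] [alpha [Ha _]]] Hone] C0 Cm.
pose f := fd cov.
have fE v i : in_Ci C i v <-> f v = i by exact: fdE.
have fB v : (f v <= rho)%N by exact: (fdP cov v).1.
have Hf : good f.
  split.
  - move=> v p; have [_ [[c [Cc dc]] _]] := fdP cov v.
    have [_ [_ H]] := fdP cov (nbr v p).
    have := H c Cc; have := dist_nbr v c p; rewrite dc /f; lia.
  - move=> v; rewrite -(nb_countE cov); apply: Hone; [exact: fB | exact: (fdP cov v).2].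
  - move=> u v j e; rewrite -!(nb_countE cov).
    case: (leqP j rho) => hj.
      rewrite (Ha (f u) j u (fB u) hj (fdP cov u).2).
      by rewrite e (Ha (f v) j v (fB v) hj (fdP cov v).2).
    have Z w : #|[pred p | f (nbr w p) == j]| = 0%N.
      apply: eq_card0 => p; rewrite !inE; apply/negbTE/eqP => E.
      by have := fB (nbr w p); rewrite E; lia.
    rewrite !(nb_countE cov); exact: (etrans (Z u) (esym (Z v))).
have H0 : Top f (@zero_pt n).
  rewrite /Top.
  have -> : nbr (@zero_pt n) (ord_max,false) = @minus_en n.
    apply: functional_extensionality => k; rewrite /nbr /zero_pt /minus_en /=.
    by case: (k == ord_max).
  have z1 : f (@zero_pt n) = 0%N.
    apply: (proj1 (fE (@zero_pt n) 0%N)); split; first by exists (@zero_pt n); rewrite dist_self.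
    by [].
  have z2 : f (@minus_en n) = 0%N.
    apply: (proj1 (fE (@minus_en n) 0%N)); split; first by exists (@minus_en n); rewrite dist_self.
    by [].
  by rewrite z1 z2.
split.
  move=> x s xm; exists (f x); split; first exact: fB.
  split; first exact: (proj2 (fE x (f x))).
  apply: (proj2 (fE _ (f x))); have -> : shift_n x (-1) = nbr x (ord_max,false).
    apply: functional_extensionality => k; rewrite /shift_n /nbr /=.
    by case: (k == ord_max).
  exact: (top_all Hf H0 xm).
split.
  move=> x i _; have [G1 G2 G3 G4 G5] := line_facts Hf H0 x; split.
    move=> t; rewrite !shift_sl => /(proj1 (fE _ _)) h; split; apply: (proj2 (fE _ _)); rewrite -h.
      by rewrite addrA; exact: (G5 (x ord_max + t)).
    have := G5 (x ord_max + t - 4).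
    have -> : x ord_max + t - 4 + 4 = x ord_max + t by lia.
    by have -> : x ord_max + t - 4 = x ord_max + (t - 4) by lia.
  move=> m s /(proj1 (fE _ _)) h; split=> E; subst m; apply: (proj2 (fE _ _)); rewrite -h.
    exact: G1.
  exact: esym (G1 s).
move=> x; have [G1 G2 G3 G4 G5] := line_facts Hf H0 x.
pose c s := f (set_last x (2 * s)).
have cS (s : int) : c (s+1) = (c s).+1 \/ c s = (c (s+1)).+1.
  have e : c (s+1) = f (set_last x (2 * s + 1)).
    rewrite /c -(G1 (s+1)); congr (f (set_last x _)); lia.
  rewrite e; have := G3 s; have := G4 (2 * s) => /= -[]; rewrite /c.
  move=> h1 h2 /eqP h3.
  have L (a b : nat) : (a <= b.+1)%N -> (b <= a.+1)%N -> a <> b -> a = b.+1 \/ b = a.+1 by lia.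
  exact: L h1 h2 h3.
have cP (s : int) : c (s+2) = c s.
  rewrite /c -(G5 (2 * s)); congr (f (set_last x _)); lia.
have pairI j (s : int) : c s = j -> pair_in C j x s.
  move=> e; split; apply: (proj2 (fE _ _)); first exact: e.
  by rewrite (G1 s).
pose i := minn (c 0) (c 1).
have c01 : c 1 = (c 0).+1 \/ c 0 = (c 1).+1 by have := cS 0; rewrite add0r.
exists i; split.
  have := fB (set_last x (2 * 0)); have := fB (set_last x (2 * 1)).
  rewrite /i /c; move: c01; rewrite /c; lia.
have Q : forall s, (c s = i /\ c (s+1) = i.+1) \/ (c s = i.+1 /\ c (s+1) = i).
  apply: int_ind2.
  - rewrite add0r /i; move: c01.
    have L (a b : nat) : b = a.+1 \/ a = b.+1 -> (a = minn a b /\ b = (minn a b).+1) \/ (a = (minn a b).+1 /\ b = minn a b) by lia.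
    exact: L.
  - move=> s; have := cP s; have -> : s + 2 = s + 1 + 1 by lia.
    have L (a b c' j : nat) : c' = a -> (a = j /\ b = j.+1) \/ (a = j.+1 /\ b = j) -> (b = j /\ c' = j.+1) \/ (b = j.+1 /\ c' = j) by lia.
    exact: L.
  - move=> s; have := cP (s - 1); have -> : s - 1 + 2 = s + 1 by lia.
    rewrite subrK.
    have L (a b c' j : nat) : b = c' -> (a = j /\ b = j.+1) \/ (a = j.+1 /\ b = j) -> (c' = j /\ a = j.+1) \/ (c' = j.+1 /\ a = j) by lia.
    exact: L.
move=> s; case: (Q s) => -[a b]; [left|right]; split; exact: pairI.
Qed.
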